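(* Let $n\ge 3$ and let $B$ be a set of points in $PG(n,q)$ whose span $\langle B\rangle$ has dimension at least $3$. Suppose that every point $R\notin B$ lying on at least one secant line to $B$ lies on no tangent line to $B$. Then $|B|\geq 3q$.
   Context: A secant line to $B$ is a line meeting $B$ in at least two points. A tangent line to $B$ is a line meeting $B$ in exactly one point. *)

(* Defs.v *)
From HB Require Import structures.
From mathcomp Require Import all_boot all_order all_algebra all_fingroup all_field.
Set Implicit Arguments. Unset Strict Implicit. Unset Printing Implicit Defensive.
Import GRing.Theory.
Local Open Scope ring_scope.

(* PG(n,q) over a finite field F with #|F| = q: projective k-subspaces are
   (k+1)-dimensional subspaces of F^(n+1), represented canonically by their
   row-space matrix <<A>>%MS (so equality of subspaces is Leibniz equality). *)
Definition is_psub (F : fieldType) (n k : nat) (A : 'M[F]_(n.+1)) : bool :=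
  (\rank A == k.+1)%N && (<<A>>%MS == A).

Definition PGpoint (F : finFieldType) (n : nat) :=
  {A : 'M[F]_(n.+1) | is_psub 0 A}.

Definition PGline (F : finFieldType) (n : nat) :=
  {A : 'M[F]_(n.+1) | is_psub 1 A}.

Definition on_line (F : finFieldType) (n : nat) (P : PGpoint F n) (L : PGline F n) : bool :=
  (val P <= val L)%MS.

Definition meet_count (F : finFieldType) (n : nat) (B : {set PGpoint F n}) (L : PGline F n) : nat :=
  #|[set P in B | on_line P L]|.

Definition secant (F : finFieldType) (n : nat) (B : {set PGpoint F n}) (L : PGline F n) : Prop :=
  (2 <= meet_count B L)%N.

Definition tangent (F : finFieldType) (n : nat) (B : {set PGpoint F n}) (L : PGline F n) : Prop :=
  meet_count B L = 1%N.

Definition span_pdim (F : finFieldType) (n : nat) (B : {set PGpoint F n}) : nat :=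
  (\rank (\sum_(P in B) val P)%MS).-1.

(* Main.v *)
Require Import Defs.
From mathcomp Require Import all_boot all_order all_algebra all_fingroup all_field.
From mathcomp Require Import zify.
Set Implicit Arguments. Unset Strict Implicit. Unset Printing Implicit Defensive.
Import GRing.Theory.
Local Open Scope ring_scope.

Lemma pt_rank (F : finFieldType) n (P : PGpoint F n) : \rank (val P) = 1%N.
Proof. by case: P => A /= /andP[/eqP]. Qed.
Lemma pt_gen (F : finFieldType) n (P : PGpoint F n) : <<val P>>%MS = val P.
Proof. by case: P => A /= /andP[_ /eqP]. Qed.

Lemma pt_sub_eq (F : finFieldType) n (P Q : PGpoint F n) :
  (val P <= val Q)%MS -> P = Q.
Proof.
move=> h; apply: val_inj; rewrite -(pt_gen P) -(pt_gen Q); apply: eq_genmx.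
apply/eqmxP; by rewrite -(eq_leqif (mxrank_leqif_eq h)) !pt_rank.
Qed.

Lemma rank_two (F : finFieldType) n (P Q : PGpoint F n) :
  P != Q -> \rank (val P + val Q)%MS = 2%N.
Proof.
move=> hPQ; apply/eqP; rewrite eqn_leq; apply/andP; split.
  by have := leq_of_leqif (mxrank_adds_leqif (val P) (val Q)); rewrite !pt_rank.
have: (val P < val P + val Q)%MS.
  rewrite ltmxE addsmxSl addsmx_sub submx_refl /=.
  by apply: contra hPQ => /pt_sub_eq ->.
by move/rank_ltmx; rewrite pt_rank.
Qed.

Lemma vpt_psub (F : finFieldType) n (v : 'rV[F]_(n.+1)) :
  v != 0 -> is_psub 0 <<v>>%MS.
Proof.
move=> hv; rewrite /is_psub genmx_id eqxx andbT mxrank_gen eqn_leq rank_leq_row /=.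
by rewrite lt0n mxrank_eq0.
Qed.

Lemma exists_pt (F : finFieldType) n m (A : 'M[F]_(m, n.+1)) :
  A != 0 -> exists P : PGpoint F n, (val P <= A)%MS.
Proof.
move=> hA; have hv : nz_row A != 0 by rewrite nz_row_eq0.
exists (exist (fun A => is_psub 0 A) _ (vpt_psub hv)); by rewrite /= genmxE nz_row_sub.
Qed.

Lemma pt_vec (F : finFieldType) n (P : PGpoint F n) :
  exists v : 'rV[F]_(n.+1), v != 0 /\ val P = <<v>>%MS.
Proof.
have hP : val P != 0 by rewrite -mxrank_eq0 pt_rank.
have hv : nz_row (val P) != 0 by rewrite nz_row_eq0.
exists (nz_row (val P)); split => //.
rewrite -{1}(pt_gen P); symmetry; apply: eq_genmx; apply/eqmxP.
have h := nz_row_sub (val P).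
rewrite -(eq_leqif (mxrank_leqif_eq h)) pt_rank.
by apply/eqP/anti_leq; rewrite rank_leq_row lt0n mxrank_eq0.
Qed.

Lemma ln_psub (F : finFieldType) n (P Q : PGpoint F n) :
  P != Q -> is_psub 1 <<(val P + val Q)%MS>>%MS.
Proof. by move=> h; rewrite /is_psub genmx_id eqxx andbT mxrank_gen (rank_two h). Qed.

Lemma two_in (T : finType) (A : {set T}) x :
  (2 <= #|A|)%N -> x \in A -> exists y, y \in A /\ y != x.
Proof.
move=> h2 hx; have : (0 < #|A :\ x|)%N.
  by move: h2; rewrite (cardsD1 x) hx.
case/card_gt0P => y; rewrite in_setD1 => /andP[hyx hy]; by exists y.
Qed.

Lemma secant_of (F : finFieldType) n (B : {set PGpoint F n}) L P Q :
  P \in B -> Q \in B -> P != Q -> on_line P L -> on_line Q L -> secant B L.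
Proof.
move=> hP hQ hPQ hPL hQL; rewrite /secant /meet_count.
apply: leq_trans (_ : #|[set P; Q]| <= _)%N; first by rewrite cards2 hPQ.
apply: subset_leq_card; apply/subsetP => R; rewrite !inE.
by case/orP => /eqP ->; rewrite ?hP ?hQ.
Qed.

Lemma not_tan_sec (F : finFieldType) n (B : {set PGpoint F n}) L X :
  X \in B -> on_line X L -> ~ tangent B L -> secant B L.
Proof.
move=> hX hXL ht; rewrite /secant.
have : (0 < meet_count B L)%N.
  by apply/card_gt0P; exists X; rewrite inE hX hXL.
move: ht; rewrite /tangent; case: (meet_count B L) => [|[|k]] //.
Qed.
Lemma indep3 (F : fieldType) N (p q x : 'rV[F]_N) :
  p != 0 -> ~~ (q <= p)%MS -> ~~ (x <= (p + q)%MS)%MS ->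
  forall a b c : F, a *: x + b *: p + c *: q = 0 -> [/\ a = 0, b = 0 & c = 0].
Proof.
move=> hp hq hx a b c E.
have ha : a = 0.
  apply/eqP; apply: contraR hx => ha.
  have -> : x = a^-1 *: (a *: x) by rewrite scalerA mulVf // scale1r.
  apply: scalemx_sub.
  have -> : a *: x = - (b *: p + c *: q) by apply/eqP; rewrite -addr_eq0 addrA E.
  rewrite eqmx_opp; apply: addmx_sub; apply: scalemx_sub; [exact: addsmxSl| exact: addsmxSr].
move: E; rewrite ha scale0r add0r => E.
have hc : c = 0.
  apply/eqP; apply: contraR hq => hc.
  have -> : q = c^-1 *: (c *: q) by rewrite scalerA mulVf // scale1r.
  apply: scalemx_sub.
  have -> : c *: q = - (b *: p) by apply/eqP; rewrite -addr_eq0 addrC E.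
  by rewrite eqmx_opp; apply: scalemx_sub.
move: E; rewrite hc scale0r addr0 => /eqP; rewrite scaler_eq0 (negbTE hp) orbF => /eqP hb.
by [].
Qed.

Lemma lin3 (V : zmodType) (a1 a2 b1 b2 c1 c2 : V) :
  (a1 - a2) + (b1 - b2) + (c1 - c2) = (a1 + b1 + c1) - (a2 + b2 + c2).
Proof. by rewrite (addrACA a1) -opprD (addrACA (a1 + b1)) -opprD. Qed.

Lemma indep3_eq (F : fieldType) N (p q x : 'rV[F]_N) :
  p != 0 -> ~~ (q <= p)%MS -> ~~ (x <= (p + q)%MS)%MS ->
  forall a1 b1 c1 a2 b2 c2 : F,
  a1 *: x + b1 *: p + c1 *: q = a2 *: x + b2 *: p + c2 *: q ->
  [/\ a1 = a2, b1 = b2 & c1 = c2].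
Proof.
move=> hp hq hx a1 b1 c1 a2 b2 c2 E.
have [] := indep3 hp hq hx (a := a1 - a2) (b := b1 - b2) (c := c1 - c2).
  by rewrite !scalerBl lin3 E subrr.
by move=> /eqP; rewrite subr_eq0 => /eqP -> /eqP; rewrite subr_eq0 => /eqP -> /eqP; rewrite subr_eq0 => /eqP ->.
Qed.

Lemma card_F_ge2 (F : finFieldType) : (2 <= #|F|)%N.
Proof.
have h : #|[set (0 : F); 1]| = 2%N by rewrite cards2 eq_sym oner_neq0.
by rewrite -h; apply: subset_leq_card; apply/subsetP.
Qed.

Definition c1 (F : finFieldType) (s : ((F * F) + F)%type) : F :=
  match s with inl _ => 1 | inr _ => 0 end.
Definition c2 (F : finFieldType) (s : ((F * F) + F)%type) : F :=
  match s with inl ab => ab.1 | inr _ => 1 end.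
Definition c3 (F : finFieldType) (s : ((F * F) + F)%type) : F :=
  match s with inl ab => ab.2 | inr a => a end.

Lemma plane_card (F : finFieldType) n (P Q X : PGpoint F n) :
  ~~ (val Q <= val P)%MS -> ~~ (val X <= (val P + val Q)%MS)%MS ->
  (3 * #|F| <= #|[set Z : PGpoint F n | (val Z <= (val P + val Q + val X)%MS)%MS]|)%N.
Proof.
move=> hQ hX.
have [pv [pv0 eP]] := pt_vec P.
have [qv [qv0 eQ]] := pt_vec Q.
have [xv [xv0 eX]] := pt_vec X.
have hq : ~~ (qv <= pv)%MS.
  by apply: contra hQ; rewrite eP eQ !genmxE.
have hx : ~~ (xv <= (pv + qv)%MS)%MS.
  apply: contra hX => h; rewrite eX genmxE (submx_trans h) //.
  by rewrite eP eQ addsmxS // genmxE.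
pose vec (s : ((F * F) + F)%type) := c1 s *: xv + c2 s *: pv + c3 s *: qv.
have vec0 s : vec s != 0.
  apply/negP => /eqP h; have [h1 h2 _] := indep3 pv0 hq hx h; clear h.
  by case: s h1 h2 => [ab|a] /= h1 h2; [move: h1|move: h2] => /eqP; rewrite oner_eq0.
pose g s : PGpoint F n := insubd P <<vec s>>%MS.
have gE s : val (g s) = <<vec s>>%MS.
  by rewrite /g insubdK //; exact: (vpt_psub (vec0 s)).
have ginj : injective g.
  move=> s t hst; have : (vec t <= vec s)%MS.
    by rewrite -genmxE -gE -hst gE genmxE.
  case/sub_rVP => k hk.
  have : vec t = (k * c1 s) *: xv + (k * c2 s) *: pv + (k * c3 s) *: qv.
    by rewrite hk /vec !scalerDr !scalerA.
  case/(indep3_eq pv0 hq hx).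
  case: s {hst hk} => [[a b]|a]; case: t => [[a' b']|a'] /=;
    rewrite ?mulr1 ?mulr0.
  - by move=> <- ->; rewrite !mul1r => ->.
  - by move=> k0; rewrite -k0 mul0r => /eqP; rewrite oner_eq0.
  - by move=> /eqP; rewrite oner_eq0.
  - by move=> _ <-; rewrite mul1r => ->.
apply: leq_trans (_ : #|[set g s | s in [set: ((F * F) + F)%type]]| <= _)%N.
  rewrite card_imset // cardsT card_sum card_prod.
  have := card_F_ge2 F; set q := #|F|; move=> hq2.
  by rewrite -[3%N]/(2+1)%N mulnDl mul1n leq_add2r leq_mul2r hq2 orbT.
apply: subset_leq_card; apply/subsetP => Z /imsetP [s _ ->].
rewrite inE gE genmxE /vec.
have hxs : (xv <= (val P + val Q + val X)%MS)%MS.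
  by rewrite -genmxE -eX addsmxSr.
have hps : (pv <= (val P + val Q + val X)%MS)%MS.
  by rewrite -genmxE -eP -addsmxA addsmxSl.
have hqs : (qv <= (val P + val Q + val X)%MS)%MS.
  by rewrite -genmxE -eQ -addsmxA (submx_trans (addsmxSl _ (val X))) // addsmxSr.
by rewrite !addmx_sub // scalemx_sub.
Qed.

Lemma cap_pt (F : finFieldType) n (sig : 'M[F]_(n.+1)) (Y Z W : PGpoint F n) :
  ~~ (val Y <= sig)%MS -> (val Z <= sig)%MS ->
  (val W <= (val Y + val Z)%MS)%MS -> (val W <= sig)%MS -> W = Z.
Proof.
move=> hY hZ hW1 hW2.
have hYZ : Y != Z by apply: contra hY => /eqP ->.
set C := ((val Y + val Z)%MS :&: sig)%MS.
have hr := mxrank_sum_cap (val Y + val Z)%MS sig.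
have hlt : (\rank sig < \rank ((val Y + val Z)%MS + sig)%MS)%N.
  apply: rank_ltmx; rewrite ltmxE addsmxSr /=.
  apply: contra hY => h; apply: submx_trans h.
  exact: submx_trans (addsmxSl _ _) (addsmxSl _ _).
have hC : (\rank C <= 1)%N.
  move: hr; rewrite (rank_two hYZ) -/C => hr; lia.
have hZC : (val Z <= C)%MS by rewrite sub_capmx addsmxSr hZ.
have : (val Z == C)%MS.
  have := mxrankS hZC; rewrite pt_rank => h1.
  by rewrite -(eq_leqif (mxrank_leqif_eq hZC)) pt_rank eqn_leq h1 hC.
case/andP => _ hCZ; apply: pt_sub_eq; apply: submx_trans hCZ.
by rewrite sub_capmx hW1.
Qed.

Theorem mainTheorem15 (F : finFieldType) (n : nat) (B : {set PGpoint F n}) :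
  (3 <= n)%N ->
  (3 <= span_pdim B)%N ->
  (forall R : PGpoint F n, R \notin B ->
     (exists L : PGline F n, secant B L /\ on_line R L) ->
     forall L : PGline F n, on_line R L -> ~ tangent B L) ->
  (3 * #|F| <= #|B|)%N.
Proof.
move=> _ hspan H.
have hS : (4 <= \rank (\sum_(P in B) val P)%MS)%N.
  by move: hspan; rewrite /span_pdim; case: (\rank _).
have ex_out m (A : 'M[F]_(m, n.+1)) : (\rank A < 4)%N ->
    exists2 P, P \in B & ~~ (val P <= A)%MS.
  move=> hA; apply/exists_inP; rewrite -negb_forall_in; apply/negP => /forall_inP h.
  have : (\sum_(P in B) val P <= A)%MS by apply/sumsmx_subP.
  move/mxrankS => h2; have := leq_ltn_trans h2 hA; by rewrite ltnNge hS.
have [P hPB _] := ex_out _ (0 : 'M[F]_(n.+1)) ltac:(by rewrite mxrank0).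
have [Q hQB hQ] := ex_out _ (val P) ltac:(by rewrite pt_rank).
have hPQ : P != Q by apply: contra hQ => /eqP ->.
have [X hXB hX] := ex_out _ (val P + val Q)%MS ltac:(by rewrite (rank_two hPQ)).
set sig := (val P + val Q + val X)%MS.
have hsig3 : (\rank sig <= 3)%N.
  have := leq_of_leqif (mxrank_adds_leqif (val P + val Q)%MS (val X)).
  by rewrite (rank_two hPQ) pt_rank.
have [Y hYB hY] := ex_out _ sig ltac:(by []).
set T := [set Z : PGpoint F n | (val Z <= sig)%MS].
have hPs : (val P <= sig)%MS by rewrite /sig -addsmxA addsmxSl.
have hQs : (val Q <= sig)%MS.
  by rewrite /sig -addsmxA (submx_trans (addsmxSl _ (val X))) // addsmxSr.
have hXs : (val X <= sig)%MS by rewrite /sig addsmxSr.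
pose lnPQ : PGline F n := exist (fun A => is_psub 1 A) _ (ln_psub hPQ).
have secPQ : secant B lnPQ.
  by apply: (secant_of hPB hQB hPQ); rewrite /on_line /= genmxE ?addsmxSl ?addsmxSr.
have step1 Z : Z \in T -> Z \notin B -> exists L, secant B L /\ on_line Z L.
  rewrite inE => hZs hZB.
  have hXZ : X != Z by apply: contraNneq hZB => <-.
  case: (boolP (val Z <= val P + val Q)%MS) => hZ.
    by exists lnPQ; split => //; rewrite /on_line /= genmxE.
  pose M : PGline F n := exist (fun A => is_psub 1 A) _ (ln_psub hXZ).
  have hXM : on_line X M by rewrite /on_line /= genmxE addsmxSl.
  have hZM : on_line Z M by rewrite /on_line /= genmxE addsmxSr.
  exists M; split => //.
  set C := ((val X + val Z)%MS :&: (val P + val Q)%MS)%MS.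
  have hr := mxrank_sum_cap (val X + val Z)%MS (val P + val Q)%MS.
  have hle : (\rank ((val X + val Z)%MS + (val P + val Q)%MS)%MS <= 3)%N.
    apply: leq_trans hsig3; apply: mxrankS.
    by rewrite !addsmx_sub hXs hZs hPs hQs.
  have hC : C != 0.
    rewrite -mxrank_eq0; move: hr; rewrite (rank_two hXZ) (rank_two hPQ) -/C.
    move=> hr; apply/eqP => h0; rewrite h0 addn0 in hr; by rewrite hr in hle.
  have [W hW] := exists_pt hC.
  move: hW; rewrite sub_capmx => /andP[hW1 hW2].
  have hWM : on_line W M by rewrite /on_line /= genmxE.
  case: (boolP (W \in B)) => hWB.
    have hXW : X != W by apply: contra hX => /eqP ->.
    exact: secant_of hXB hWB hXW hXM hWM.
  apply: (not_tan_sec hXB hXM).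
  apply: (H W hWB _ M hWM).
  by exists lnPQ; split => //; rewrite /on_line /= genmxE.
have step2 Z : Z \in T :\: B ->
    exists Y', (Y' \in B) && ((Y' != Y) && (val Y' <= val Y + val Z)%MS).
  rewrite inE => /andP[hZB hZT].
  have hYZ : Y != Z by apply: contra hY => /eqP ->; rewrite inE in hZT.
  pose M : PGline F n := exist (fun A => is_psub 1 A) _ (ln_psub hYZ).
  have hYM : on_line Y M by rewrite /on_line /= genmxE addsmxSl.
  have hZM : on_line Z M by rewrite /on_line /= genmxE addsmxSr.
  have := not_tan_sec hYB hYM (H Z hZB (step1 Z hZT hZB) M hZM).
  rewrite /secant /meet_count => h2.
  have hYin : Y \in [set R in B | on_line R M] by rewrite inE hYB hYM.
  have [Y' []] := two_in h2 hYin.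
  rewrite inE => /andP[hY'B hY'M] hY'Y; exists Y'.
  by rewrite hY'B hY'Y -(genmxE (val Y + val Z)%MS).
pose f (Z : PGpoint F n) : PGpoint F n := odflt Y [pick Y' in B | (Y' != Y) && (val Y' <= val Y + val Z)%MS].
have fP Z : Z \in T :\: B ->
    [/\ f Z \in B, f Z != Y & (val (f Z) <= val Y + val Z)%MS].
  move=> hZ; rewrite /f; case: pickP => [Y' /andP[hB /andP[h1 h2]] | hnone] //=.
  by have [Y' /andP[h1 h2]] := step2 Z hZ; move: (hnone Y'); rewrite h1 h2.
have hZs Z : Z \in T :\: B -> (val Z <= sig)%MS.
  by rewrite !inE => /andP[].
have fout Z : Z \in T :\: B -> f Z \in B :\: T.
  move=> hZ; have [h1 h2 h3] := fP Z hZ.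
  rewrite !inE h1 andbT; apply/negP => hfs.
  have := cap_pt hY (hZs Z hZ) h3 hfs => e.
  by move: hZ; rewrite !inE -e h1.
have finj : {in T :\: B &, injective f}.
  move=> Z1 Z2 hZ1 hZ2' e.
  have [h1 h2 h3] := fP Z1 hZ1; have [k1 k2 k3] := fP Z2 hZ2'.
  rewrite -e in k3.
  have hYW : Y != f Z1 by rewrite eq_sym.
  have hYZ2 : Y != Z2 by apply: contra hY => /eqP ->; exact: hZs.
  have hsub : (val Y + val (f Z1) <= val Y + val Z2)%MS.
    by rewrite addsmx_sub addsmxSl k3.
  have : (val Y + val (f Z1) == val Y + val Z2)%MS.
    by rewrite -(eq_leqif (mxrank_leqif_eq hsub)) (rank_two hYW) (rank_two hYZ2).
  case/andP => _ hback.
  have hZ2 : (val Z2 <= val Y + val Z1)%MS.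
    apply: submx_trans (addsmxSr (val Y) _) _; apply: submx_trans hback _.
    by rewrite addsmx_sub addsmxSl h3.
  by apply: esym; apply: (cap_pt hY (hZs Z1 hZ1) hZ2 (hZs Z2 hZ2')).
have hT : (#|T| <= #|B|)%N.
  rewrite -(cardsID T B) -(cardsID B T) setIC leq_add2l.
  rewrite -(card_in_imset finj); apply: subset_leq_card.
  by apply/subsetP => W /imsetP [Z hZ ->]; apply: fout.
apply: leq_trans hT.
by apply: plane_card.
Qed.
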